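(* Let $G=S_\infty$ and $m<\omega$. (a) If $M\subseteq S(G)$ is a minimal subflow, then $\phi(\mathcal{F}^M_m)$ is a thick ultrafilter on $[\omega]^m$. (b) Conversely, if $p$ is a thick ultrafilter on $[\omega]^m$, then $\{\phi^{-1}(T):T\in p\}$ generates a maximal thick filter on $H_m$, and hence there is a minimal subflow $M\subseteq S(G)$ with $p=\phi(\mathcal{F}^M_m)$.
   Context: View $S_\infty$ as the automorphism group of $\omega$ in the empty language with $\mathbf{A}_n=n=\{0,\dots,n-1\}$; $H_n$ is the set of injections $n\to\omega$, written as tuples $(s_0,\dots,s_{n-1})$, and $\mathrm{Emb}(\mathbf{A}_m,\mathbf{A}_n)$ the set of injections $m\to n$. $S(G)$ is the inverse limit of the spaces $\beta H_n$ of ultrafilters along the continuous extensions of restriction maps $H_n\to H_m$; $\alpha(n)$ denotes the $n$-th coordinate. Right $G$-action: for $S\subseteq H_m$, $S\in(\alpha g)(m)$ iff $\{x\in H_n:x\circ g|_m\in S\}\in\alpha(n)$, for $n$ with $g(\{0,..,m-1\})\subseteq n$. A minimal subflow is a nonempty closed $G$-invariant subset containing no proper such subset. For closed $Y$, $\mathcal{F}^Y_m=\{T\subseteq H_m:T\in\alpha(m)\ \forall\alpha\in Y\}$. $T\subseteq H_m$ is thick if for every $n\geq m$ there is $s\in H_n$ with $s\circ\mathrm{Emb}(\mathbf{A}_m,\mathbf{A}_n)\subseteq T$; $T\subseteq[\omega]^m$ is thick if for every $n\geq m$ there is $s\in[\omega]^n$ with $[s]^m\subseteq T$. A thick filter (ultrafilter)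 is one all of whose members are thick; a maximal thick filter is one maximal among thick filters. $\phi:H_m\to[\omega]^m$ is $\phi(y_0,\dots,y_{m-1})=\{y_0,\dots,y_{m-1}\}$, and for a filter $\mathcal{F}$ on $H_m$, $\phi(\mathcal{F})=\{T\subseteq[\omega]^m:\phi^{-1}(T)\in\mathcal{F}\}$. *)

(* Defs.v *)
From mathcomp Require Import all_boot.
From mathcomp Require Import finmap.

Set Implicit Arguments.
Unset Strict Implicit.
Unset Printing Implicit Defensive.

Local Open Scope fset_scope.

Definition pset (T : Type) := T -> Prop.

(* H_n : injections n -> omega, written as duplicate-free tuples (s_0,...,s_{n-1}). *)
Definition H (n : nat) := {s : seq nat | (size s == n) && uniq s}.

Definition inH (m : nat) (S : pset (H m)) (s : seq nat) : Prop :=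
  exists y : H m, S y /\ val y = s.

Definition is_filter (T : Type) (F : pset (pset T)) : Prop :=
  [/\ F (fun _ => True),
      (forall A B : pset T, F A -> (forall x, A x -> B x) -> F B) &
      (forall A B : pset T, F A -> F B -> F (fun x => A x /\ B x))].

Definition is_ultrafilter (T : Type) (U : pset (pset T)) : Prop :=
  [/\ is_filter U, ~ U (fun _ => False) &
      (forall A : pset T, U A \/ U (fun x => ~ A x))].

Definition gen_filter (T : Type) (B : pset (pset T)) : pset (pset T) :=
  fun S => forall F : pset (pset T), is_filter F ->
             (forall b, B b -> F b) -> F S.

(* Points of S(G): compatible families alpha(n) of ultrafilters on H_n,
   compatibility along the (extensions of the) restriction maps H_n -> H_m. *)
Definition SGfam := forall n : nat, pset (pset (H n)).

Definition isSG (alpha : SGfam) : Prop :=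
  (forall n, is_ultrafilter (alpha n)) /\
  (forall m n, m <= n -> forall S : pset (H m),
      alpha m S <-> alpha n (fun x : H n => inH S (take m (val x)))).

Definition Sinfty (g : nat -> nat) : Prop := bijective g.

Definition bnd (g : nat -> nat) (m : nat) : nat := \max_(i < m) (g i).+1.

(* Right action: S ∈ (alpha g)(m) iff {x ∈ H_n : x ∘ g|_m ∈ S} ∈ alpha(n). *)
Definition act (alpha : SGfam) (g : nat -> nat) : SGfam :=
  fun m S => alpha (bnd g m)
    (fun x : H (bnd g m) => inH S [seq nth 0 (val x) (g i) | i <- iota 0 m]).

(* Closed subsets of S(G) (inverse-limit topology; the sets
   {beta : S ∈ beta(n)} form a base). *)
Definition closedSG (Y : pset SGfam) : Prop :=
  forall alpha, isSG alpha ->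
    (forall n (S : pset (H n)), alpha n S -> exists beta, Y beta /\ beta n S) ->
    Y alpha.

Definition subflow (Y : pset SGfam) : Prop :=
  [/\ (forall alpha, Y alpha -> isSG alpha),
      (exists alpha, Y alpha),
      closedSG Y &
      (forall g, Sinfty g -> forall alpha, Y alpha -> Y (act alpha g))].

Definition minimal_subflow (M : pset SGfam) : Prop :=
  subflow M /\
  (forall N : pset SGfam, subflow N -> (forall a, N a -> M a) ->
     forall a, M a -> N a).

Definition FY (Y : pset SGfam) (m : nat) : pset (pset (H m)) :=
  fun T => forall alpha, Y alpha -> alpha m T.
Arguments FY : clear implicits.

Definition thickH (m : nat) (T : pset (H m)) : Prop :=
  forall n, m <= n -> exists s : H n,
    forall e : 'I_m -> 'I_n, injective e ->
      inH T [seq nth 0 (val s) (e i) | i <- enum 'I_m].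

Definition OmSub (m : nat) := {A : {fset nat} | #|` A| == m}.

Definition thickS (m : nat) (T : pset (OmSub m)) : Prop :=
  forall n, m <= n -> exists s : OmSub n,
    forall A : OmSub m, val A `<=` val s -> T A.

Definition thick_filterH (m : nat) (F : pset (pset (H m))) : Prop :=
  is_filter F /\ (forall T, F T -> thickH T).

Definition maximal_thick_filterH (m : nat) (F : pset (pset (H m))) : Prop :=
  thick_filterH F /\
  (forall F', thick_filterH F' -> (forall T, F T -> F' T) -> forall T, F' T -> F T).

Definition thick_ultrafilterS (m : nat) (p : pset (pset (OmSub m))) : Prop :=
  is_ultrafilter p /\ (forall T, p T -> thickS T).

Definition phi_set (m : nat) (x : H m) : {fset nat} := [fset y | y in val x].

Definition phi_pre (m : nat) (T : pset (OmSub m)) : pset (H m) :=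
  fun x => exists A : OmSub m, T A /\ val A = phi_set x.

Definition phi_img (m : nat) (F : pset (pset (H m))) : pset (pset (OmSub m)) :=
  fun T => F (phi_pre T).

(* Main.v *)
Require Import Defs.
From mathcomp Require Import all_boot.
From mathcomp Require Import finmap.
From mathcomp Require classical_sets filter boolp.
From Stdlib Require Import Classical.

Set Implicit Arguments.
Unset Strict Implicit.
Unset Printing Implicit Defensive.


Lemma uf_ext (T : Type) (F : pset (pset T)) :
  is_filter F -> ~ F (fun _ => False) ->
  exists U, is_ultrafilter U /\ (forall A, F A -> U A).
Proof.
move=> [FT FS FI] F0.
have PF : filter.ProperFilter F.
  constructor; first exact: F0.
  constructor; first exact: FT.
  - by move=> A B; apply: FI.
  - by move=> A B AB FA; apply: FS FA AB.
have [G [UG FG]] := filter.ultraFilterLemma PF.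
exists G; split => //.
have PG : filter.ProperFilter G := filter.ultra_proper.
have FG' : filter.Filter G := filter.filter_filter.
split.
- split.
  + exact: filter.filterT.
  + by move=> A B GA AB; apply: (filter.filterS AB).
  + by move=> A B; apply: filter.filterI.
- exact: filter.filter_not_empty.
- move=> A; exact: filter.in_ultra_setVsetC.
Qed.


Section UF.
Variables (T : Type) (U : pset (pset T)).
Hypothesis UU : is_ultrafilter U.

Lemma uf_T : U (fun _ => True). Proof. by case: UU => [[]]. Qed.
Lemma uf_mono {A B} : U A -> (forall x, A x -> B x) -> U B.
Proof. by case: UU => [[_ h _]] _ _; apply: h. Qed.
Lemma uf_and {A B} : U A -> U B -> U (fun x => A x /\ B x).
Proof. by case: UU => [[_ _ h]] _ _; apply: h. Qed.
Lemma uf_F : ~ U (fun _ => False). Proof. by case: UU. Qed.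
Lemma uf_em A : U A \/ U (fun x => ~ A x). Proof. by case: UU. Qed.
Lemma uf_ne {A} : U A -> exists x, A x.
Proof.
move=> UA; apply: NNPP => nA; apply: uf_F; apply: (uf_mono UA) => x Ax.
by apply: nA; exists x.
Qed.
Lemma uf_all {A} : (forall x, A x) -> U A.
Proof. by move=> h; apply: (uf_mono uf_T) _. Qed.
Lemma uf_or {A B} : U (fun x => A x \/ B x) -> U A \/ U B.
Proof.
move=> UAB; case: (uf_em A) => [|nA]; first by left.
right; apply: (uf_mono (uf_and UAB nA)) => x [[Ax|Bx] nAx]; [by case: nAx | exact: Bx].
Qed.
Lemma uf_not {A} : U A -> ~ U (fun x => ~ A x).
Proof. by move=> UA UnA; apply: uf_F; apply: (uf_mono (uf_and UA UnA)) => x []. Qed.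

Lemma uf_bigI (I : eqType) (l : seq I) (A : I -> pset T) :
  (forall i, i \in l -> U (A i)) -> U (fun x => forall i, i \in l -> A i x).
Proof.
elim: l => [|j l IH] h.
  by apply: uf_all => x i; rewrite in_nil.
have h1 : U (A j) by apply: h; rewrite inE eqxx.
have h2 := IH (fun i il => h i (@mem_behead _ (j :: l) i il)).
apply: (uf_mono (uf_and h1 h2)) => x [Ax Hx] i; rewrite inE => /orP[/eqP->//|].
exact: Hx.
Qed.

Lemma uf_bigU (I : eqType) (l : seq I) (A : I -> pset T) :
  U (fun x => exists i, i \in l /\ A i x) -> exists i, i \in l /\ U (A i).
Proof.
elim: l => [|j l IH] h.
  by exfalso; apply: uf_F; apply: (uf_mono h) => x [i []]; rewrite in_nil.
have : U (fun x => A j x \/ exists i, i \in l /\ A i x).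
  apply: (uf_mono h) => x [i []]; rewrite inE => /orP[/eqP->|il] Ai; first by left.
  by right; exists i.
case/uf_or => [Aj|/IH [i [il Ai]]]; first by exists j; rewrite inE eqxx.
by exists i; rewrite inE il orbT.
Qed.
End UF.

Definition lim (I : Type) (W : pset (pset I)) (b : I -> SGfam) : SGfam :=
  fun k S => W (fun i => b i k S).

Lemma lim_SG (I : Type) (W : pset (pset I)) (b : I -> SGfam) :
  is_ultrafilter W -> (forall i, isSG (b i)) -> isSG (lim W b).
Proof.
move=> UW hb.
have hu : forall i n, is_ultrafilter (b i n) by move=> i n; case: (hb i) => h _; exact: h.
split.
  move=> n; split; [split| |].
  - by apply: (uf_all UW) => i; apply: uf_T.
  - move=> A B WA AB; apply: (uf_mono UW WA) => i bA.
    exact: (uf_mono (hu i n) bA AB).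
  - move=> A B WA WB; apply: (uf_mono UW (uf_and UW WA WB)) => i [bA bB].
    exact: (uf_and (hu i n)).
  - move=> W0; apply: (uf_F UW); apply: (uf_mono UW W0) => i.
    exact: (uf_F (hu i n)).
  - move=> A; case: (uf_em UW (fun i => b i n A)) => WA; [by left|right].
    apply: (uf_mono UW WA) => i nA.
    by case: (uf_em (hu i n) A).
move=> m n mn S; rewrite /lim; split => WS; apply: (uf_mono UW WS) => i;
  by case: (hb i) => _ h; move/(h m n mn S).
Qed.

Definition validH (n : nat) (s : seq nat) := (size s == n) && uniq s.

Definition mkH k (s : seq nat) (v : validH k s) : H k :=
  @exist _ (fun s => (size s == k) && uniq s) s v.

Lemma inH_val n (Q : seq nat -> Prop) (s : seq nat) : validH n s ->
  (inH (fun y : H n => Q (val y)) s <-> Q s).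
Proof.
move=> vs; split; first by case=> y [Qy <-].
by move=> Qs; exists (mkH vs).
Qed.

Lemma inH_elt n (S : pset (H n)) (y : H n) : inH S (val y) <-> S y.
Proof.
split; last by move=> Sy; exists y.
by case=> z [Sz /val_inj <-].
Qed.

Lemma validHP n (y : H n) : validH n (val y).
Proof. exact: (valP y). Qed.

Lemma sizeH n (y : H n) : size (val y) = n.
Proof. by case/andP: (valP y) => /eqP. Qed.

Lemma uniqH n (y : H n) : uniq (val y).
Proof. by case/andP: (valP y). Qed.

Definition gs (g : nat -> nat) (x : seq nat) (k : nat) :=
  [seq nth 0 x (g i) | i <- iota 0 k].

Lemma bnd_lt g k i : i < k -> g i < bnd g k.
Proof.
move=> ik; rewrite /bnd.
exact: (@leq_bigmax _ (fun j : 'I_k => (g j).+1) (Ordinal ik)).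
Qed.

Lemma validH_take b n (s : seq nat) : b <= n -> validH n s -> validH b (take b s).
Proof.
move=> bn /andP[/eqP sz u]; rewrite /validH size_take sz.
by rewrite (take_uniq _ u) andbT; case: ltngtP bn => // -> .
Qed.

Lemma gs_take g k b (s : seq nat) : (forall i, i < k -> g i < b) ->
  gs g (take b s) k = gs g s k.
Proof.
move=> h; apply/eq_in_map => i; rewrite mem_iota add0n => /andP[_ ik].
by rewrite nth_take // h.
Qed.

Lemma act_at (alpha : SGfam) g k N (S : pset (H k)) : isSG alpha -> bnd g k <= N ->
  (@act alpha g k S <-> alpha N (fun x : H N => inH S (gs g (val x) k))).
Proof.
move=> [ua ca] bN; rewrite /act (ca _ _ bN).
have e : forall x : H N, inH (fun y : H (bnd g k) => inH S (gs g (val y) k)) (take (bnd g k) (val x)) <-> inH S (gs g (val x) k).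
  move=> x; rewrite (inH_val (fun s => inH S (gs g s k))); last first.
    exact: validH_take bN (validHP x).
  by rewrite gs_take //; apply: bnd_lt.
by split => h; apply: (uf_mono (ua N) h) => x /e.
Qed.


Lemma gs_valid g k N (x : seq nat) : injective g -> validH N x ->
  (forall i, i < k -> g i < N) -> validH k (gs g x k).
Proof.
move=> ig /andP[/eqP sx ux] hk; rewrite /validH /gs size_map size_iota eqxx /=.
rewrite map_inj_in_uniq ?iota_uniq // => i j; rewrite !mem_iota !add0n.
move=> /andP[_ ik] /andP[_ jk] /eqP; rewrite nth_uniq ?sx ?hk // => /eqP.
exact: ig.
Qed.

Lemma pre_uf (A : Type) (U : pset (pset A)) k (f : A -> seq nat) :
  is_ultrafilter U -> (forall x, validH k (f x)) ->
  is_ultrafilter (fun S : pset (H k) => U (fun x => inH S (f x))).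
Proof.
move=> UU vf; split; [split| |].
- by apply: (uf_all UU) => x; exists (mkH (vf x)).
- move=> S1 S2 US1 S12; apply: (uf_mono UU US1) => x [y [S1y <-]].
  by exists y; split => //; apply: S12.
- move=> S1 S2 US1 US2; apply: (uf_mono UU (uf_and UU US1 US2)).
  move=> x [[y1 [S1y e1]] [y2 [S2y e2]]]; exists y1; split => //; split => //.
  by have -> : y1 = y2 by apply: val_inj; rewrite e1 e2.
- by move=> U0; apply: (uf_F UU); apply: (uf_mono UU U0) => x [y []].
- move=> S; case: (uf_em UU (fun x => S (mkH (vf x)))) => h; [left|right];
    apply: (uf_mono UU h) => x Sx; by exists (mkH (vf x)).
Qed.

Lemma bnd_mono g m n : m <= n -> bnd g m <= bnd g n.
Proof.
move=> mn; rewrite /bnd; apply/bigmax_leqP => i _.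
apply: bnd_lt; exact: leq_trans (ltn_ord i) mn.
Qed.

Lemma bnd_le g k N : (forall i, i < k -> g i < N) -> bnd g k <= N.
Proof. by move=> h; rewrite /bnd; apply/bigmax_leqP => i _; apply: h. Qed.

Lemma act_SG (alpha : SGfam) g : isSG alpha -> injective g -> isSG (act alpha g).
Proof.
move=> aS ig; have [ua ca] := aS; split.
  move=> k.
  have := @pre_uf _ (alpha (bnd g k)) k (fun x : H (bnd g k) => gs g (val x) k) (ua _).
  apply=> x; apply: gs_valid ig (validHP x) _ => i; exact: bnd_lt.
move=> m n mn S.
have bN : bnd g m <= bnd g n by apply: bnd_mono.
rewrite (act_at _ aS bN) (act_at _ aS (leqnn _)).
have e : forall x : H (bnd g n), inH S (gs g (val x) m) <->
    inH (fun y : H n => inH S (take m (val y))) (gs g (val x) n).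
  move=> x; rewrite (inH_val (fun s => inH S (take m s))); last first.
    apply: gs_valid ig (validHP x) _ => i; exact: bnd_lt.
  by rewrite /gs -map_take take_iota (minn_idPl mn).
by split => h; apply: (uf_mono (ua _) h) => x /e.
Qed.

Lemma gs_comp g h k N1 (x : seq nat) : (forall i, i < k -> g i < N1) ->
  gs g (gs h x N1) k = gs (h \o g) x k.
Proof.
move=> hg; apply/eq_in_map => i; rewrite mem_iota add0n => /andP[_ ik].
rewrite /gs (nth_map 0) ?size_iota ?hg // nth_iota ?hg //.
Qed.

Lemma act_comp (alpha : SGfam) g h k (S : pset (H k)) : isSG alpha ->
  injective g -> injective h ->
  (@act (act alpha h) g k S <-> @act alpha (h \o g) k S).
Proof.
move=> aS ig ih.
have hS := act_SG aS ih.
set N1 := bnd g k.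
set N2 := maxn (bnd h N1) (bnd (h \o g) k).
rewrite (act_at _ hS (leqnn N1)) (act_at _ aS (leq_maxl _ _ : bnd h N1 <= N2)).
rewrite (act_at _ aS (leq_maxr _ _ : bnd (h \o g) k <= N2)).
have gN1 : forall i, i < k -> g i < N1 by move=> i; apply: bnd_lt.
have e : forall x : H N2, inH (fun y : H N1 => inH S (gs g (val y) k)) (gs h (val x) N1)
   <-> inH S (gs (h \o g) (val x) k).
  move=> x; rewrite (inH_val (fun s => inH S (gs g s k))); last first.
    apply: gs_valid ih (validHP x) _ => i iN; apply: leq_trans (leq_maxl _ _).
    exact: bnd_lt.
  by rewrite gs_comp.
have [ua _] := aS.
by split => hh; apply: (uf_mono (ua _) hh) => x /e.
Qed.

Lemma act_id (alpha : SGfam) k (S : pset (H k)) : isSG alpha ->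
  (@act alpha id k S <-> alpha k S).
Proof.
move=> aS; rewrite (act_at _ aS (bnd_le (fun i (ik : i < k) => ik))).
have e : forall x : H k, inH S (gs id (val x) k) <-> S x.
  move=> x; rewrite /gs.
  have -> : [seq nth 0 (val x) (id i) | i <- iota 0 k] = val x.
    by rewrite -{2}(mkseq_nth 0 (val x)) sizeH.
  exact: inH_elt.
have [ua _] := aS.
by split => hh; apply: (uf_mono (ua _) hh) => x /e.
Qed.

Lemma ext_bij n (s : seq nat) : uniq s -> all (fun v => v < n) s ->
  exists g, bijective g /\ (forall i, i < size s -> g i = nth 0 s i).
Proof.
move=> us als.
set t := s ++ [seq j <- iota 0 n | j \notin s].
have ut : uniq t.
  rewrite cat_uniq us filter_uniq ?iota_uniq // andbT /=.
  by apply/hasPn => j; rewrite mem_filter => /andP[].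
have memt : forall j, (j \in t) = (j < n).
  move=> j; rewrite mem_cat mem_filter mem_iota add0n /=.
  case js: (j \in s) => /=; last by [].
  by move/allP: als => /(_ j js) ->.
have st : size t = n.
  have pe : perm_eq t (iota 0 n).
    apply: uniq_perm => //; first exact: iota_uniq.
    by move=> j; rewrite memt mem_iota add0n.
  by rewrite (perm_size pe) size_iota.
pose g j := if j < n then nth 0 t j else j.
pose gi j := if j < n then index j t else j.
exists g; split.
  exists gi.
    move=> j; rewrite /g /gi /=; case: (ltnP j n) => jn.
      have tn : nth 0 t j < n by rewrite -memt mem_nth ?st.
      by rewrite tn index_uniq ?st.
    by rewrite ?ltnNge ?jn.
  move=> j; rewrite /g /gi /=; case: (ltnP j n) => jn.
    have it : index j t < n by rewrite -st index_mem memt.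
    by rewrite it nth_index ?memt.
  by rewrite ?ltnNge ?jn.
move=> i iS; rewrite /g /=.
have sn : size s <= n.
  rewrite -st size_cat; exact: leq_addr.
by rewrite (leq_trans iS sn) nth_cat iS.
Qed.

Lemma ext_ord m n (e : 'I_m -> 'I_n) : injective e ->
  exists g, bijective g /\ (forall i : 'I_m, g (nat_of_ord i) = nat_of_ord (e i)).
Proof.
move=> ie.
have us : uniq [seq nat_of_ord (e i) | i <- enum 'I_m].
  rewrite map_inj_uniq ?enum_uniq // => i j /ord_inj; exact: ie.
have als : all (fun v => v < n) [seq nat_of_ord (e i) | i <- enum 'I_m].
  apply/allP => v /mapP [i _ ->] /=; exact: ltn_ord.
have [g [bg hg]] := ext_bij us als.
have sz : size [seq nat_of_ord (e i) | i <- enum 'I_m] = m.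
  by rewrite size_map size_enum_ord.
exists g; split => // i.
rewrite hg ?sz //.
by rewrite (nth_map i) ?size_enum_ord // nth_ord_enum.
Qed.

Lemma gs_ord m n (e : 'I_m -> 'I_n) g (x : seq nat) : (forall i : 'I_m, g (nat_of_ord i) = nat_of_ord (e i)) ->
  gs g x m = [seq nth 0 x (e i) | i <- enum 'I_m].
Proof.
move=> hg; rewrite /gs -val_enum_ord -map_comp; apply: eq_map => i /=.
by rewrite hg.
Qed.


Lemma bij_id : bijective (@id nat). Proof. by exists id. Qed.

Definition Inv (Z : pset SGfam) (k : nat) (Phi : pset (pset (H k))) : pset SGfam :=
  fun a => Z a /\ forall g, Sinfty g -> forall S, Phi S -> @act a g k S.

Lemma Inv_closed Z k Phi : (forall a, Z a -> isSG a) -> closedSG Z -> closedSG (@Inv Z k Phi).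
Proof.
move=> ZS cZ a aS nb; split.
  apply: cZ => // n S aS'; have [b [[Zb _] bS]] := nb n S aS'; by exists b.
move=> g bg S PS; apply: NNPP => na.
have [ua _] := aS.
have h : a (bnd g k) (fun x : H (bnd g k) => ~ inH S (gs g (val x) k)).
  case: (uf_em (ua (bnd g k)) (fun x : H (bnd g k) => inH S (gs g (val x) k))) => h; [by exfalso; apply: na|exact: h].
have [b [[Zb hb] bS]] := nb _ _ h.
have [ub _] := ZS b Zb.
exact: (uf_not (ub _) (hb g bg S PS) bS).
Qed.

Lemma Inv_inv Z k Phi : (forall a, Z a -> isSG a) ->
  (forall g, Sinfty g -> forall a, Z a -> Z (act a g)) ->
  forall g, Sinfty g -> forall a, @Inv Z k Phi a -> @Inv Z k Phi (act a g).
Proof.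
move=> ZS iZ h bh a [Za ha]; split; first exact: iZ.
move=> g bg S PS.
rewrite act_comp; [|exact: ZS|exact: bij_inj|exact: bij_inj].
by apply: ha => //; apply: bij_comp.
Qed.

Lemma Inv_subflow Z k Phi : subflow Z -> (exists a, @Inv Z k Phi a) -> subflow (@Inv Z k Phi).
Proof.
move=> [ZS _ cZ iZ] ne; split => //.
- by move=> a [Za _]; apply: ZS.
- exact: Inv_closed.
- exact: Inv_inv.
Qed.

Lemma exists_minimal (Y : pset SGfam) : subflow Y ->
  exists M, minimal_subflow M /\ (forall a, M a -> Y a).
Proof.
move=> sY.
pose T := {Z : pset SGfam | subflow Z /\ (forall a, Z a -> Y a)}.
pose R (Z1 Z2 : T) := boolp.asbool (forall a, sval Z2 a -> sval Z1 a).
have t0 : T by exists Y.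
have [| | |t tm] := @classical_sets.ZL_preorder T t0 R.
- by move=> t; apply/boolp.asboolP.
- move=> r s t /boolp.asboolP h1 /boolp.asboolP h2; apply/boolp.asboolP => a /h2.
  exact: h1.
- move=> A Atot.
  case: (classic (exists Z, A Z)) => [[Z0 AZ0]|nA]; last first.
    by exists t0 => s As; exfalso; apply: nA; exists s.
  pose I := fun a => forall Z, A Z -> sval Z a.
  have IY : forall a, I a -> Y a.
    by move=> a Ia; have [_ h] := proj2_sig Z0; apply: h; apply: Ia.
  have sub : forall Z : T, subflow (sval Z) by move=> Z; case: (proj2_sig Z).
  have ne : exists a, I a.
    pose F := fun S : pset T => exists Z0, A Z0 /\
        forall Z, A Z -> (forall a, sval Z a -> sval Z0 a) -> S Z.
    have fF : is_filter F.
      split.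
      + by exists Z0; split.
      + move=> S1 S2 [Z1 [AZ1 h]] S12; exists Z1; split => // Z AZ sZ.
        by apply: S12; apply: h.
      + move=> S1 S2 [Z1 [AZ1 h1]] [Z2 [AZ2 h2]].
        case: (Atot _ _ AZ1 AZ2) => /boolp.asboolP s12.
        * exists Z2; split => // Z AZ sZ; split; last exact: h2.
          by apply: h1 => // a /sZ /s12.
        * exists Z1; split => // Z AZ sZ; split; first exact: h1.
          by apply: h2 => // a /sZ /s12.
    have pF : ~ F (fun _ => False).
      by move=> [Z1 [AZ1 h]]; apply: (h Z1).
    have [W [UW FW]] := uf_ext fF pF.
    have [b hb] : {b : T -> SGfam & forall Z, sval Z (b Z)}.
      apply: boolp.choice => Z; by case: (sub Z) => _ ne _ _.
    have bS : forall Z, isSG (b Z) by move=> Z; case: (sub Z) => h _ _ _; apply: h.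
    exists (lim W b) => Z AZ.
    case: (sub Z) => _ _ cZ _.
    apply: cZ; first exact: lim_SG.
    move=> n S WS.
    have FZ : W (fun Z' => A Z' /\ forall a, sval Z' a -> sval Z a).
      apply: FW; exists Z; split => // Z' AZ' h; by split.
    have [Z' [[AZ' sZ'] bZ']] := uf_ne UW (uf_and UW FZ WS).
    by exists (b Z'); split => //; apply: sZ'.
  have sI : subflow I.
    split => //.
    + by move=> a Ia; case: (sub Z0) => h _ _ _; apply: h; apply: Ia.
    + move=> a aS nb Z AZ; case: (sub Z) => _ _ cZ _; apply: cZ => // n S aS'.
      by have [b [Ib bS]] := nb n S aS'; exists b; split => //; apply: Ib.
    + move=> g bg a Ia Z AZ; case: (sub Z) => _ _ _ iZ; apply: iZ => //.
      exact: Ia.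
  exists (exist _ I (conj sI IY)) => s As; apply/boolp.asboolP => a Ia.
  exact: Ia.
exists (sval t); split; last by case: (proj2_sig t).
split; first by case: (proj2_sig t).
move=> N sN Nt.
have NY : forall a, N a -> Y a by move=> a /Nt; case: (proj2_sig t) => _; apply.
have := tm (exist _ N (conj sN NY)).
have h : R t (exist _ N (conj sN NY)) by apply/boolp.asboolP.
by move=> /(_ h) /boolp.asboolP.
Qed.

Local Open Scope fset_scope.


Definition homog (c : {fset nat} -> Prop) m (B : {fset nat}) :=
  (forall A, A `<=` B -> #|` A| = m -> c A) \/
  (forall A, A `<=` B -> #|` A| = m -> ~ c A).

Definition RamseyP m := forall n, exists N, forall X : {fset nat}, N <= #|` X| ->
  forall c, exists B, B `<=` X /\ n <= #|` B| /\ homog c m B.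

Lemma ramsey0 : RamseyP 0.
Proof.
move=> n; exists n => X nX c; exists X; split; first exact: fsubset_refl.
split => //.
case: (classic (c fset0)) => h; [left|right] => A _ /cardfs0_eq -> //.
Qed.

Lemma addx (P : {fset nat} -> Prop) m x (B : {fset nat}) : x \notin B ->
  (forall A, A `<=` B -> #|` A| = m.+1 -> P A) ->
  (forall A, A `<=` B -> #|` A| = m -> P (x |` A)) ->
  forall A, A `<=` x |` B -> #|` A| = m.+1 -> P A.
Proof.
move=> xB h1 h2 A AB cA.
case xA: (x \in A).
  rewrite -(fsetD1K xA); apply: h2.
    apply/fsubsetP => y; rewrite in_fsetD1 => /andP[yx yA].
    move/fsubsetP: AB => /(_ y yA); rewrite in_fset1U (negbTE yx) //.
  by move: cA; rewrite (cardfsD1 x A) xA add1n => -[].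
apply: h1 => //; apply/fsubsetP => y yA.
move/fsubsetP: AB => /(_ y yA); rewrite in_fset1U => /orP[/eqP yx|//].
by move: xA; rewrite -yx yA.
Qed.

Lemma ramseyS m : RamseyP m -> RamseyP m.+1.
Proof.
move=> Rm.
have S : forall a b, exists N, forall X : {fset nat}, N <= #|` X| -> forall c,
   exists B, B `<=` X /\
     ((a <= #|` B| /\ forall A, A `<=` B -> #|` A| = m.+1 -> c A) \/
      (b <= #|` B| /\ forall A, A `<=` B -> #|` A| = m.+1 -> ~ c A)).
  elim=> [|a IHa] b.
    exists 0 => X _ c; exists fset0; split; first exact: fsub0set.
    left; split => // A; rewrite fsubset0 => /eqP -> ; rewrite cardfs0 //.
  elim: b => [|b IHb].
    exists 0 => X _ c; exists fset0; split; first exact: fsub0set.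
    right; split => // A; rewrite fsubset0 => /eqP -> ; rewrite cardfs0 //.
  have [N1 h1] := IHa b.+1.
  have [N2 h2] := IHb.
  have [N0 h0] := Rm (maxn N1 N2).
  exists N0.+1 => X NX c.
  have [x xX] : exists x, x \in X.
    apply/fset0Pn; rewrite -cardfs_gt0; exact: leq_trans NX.
  set Y := X `\ x.
  have YX : Y `<=` X by apply/fsubsetP => y; rewrite in_fsetD1 => /andP[].
  have xY : x \notin Y by rewrite in_fsetD1 eqxx.
  have NY : N0 <= #|` Y|.
    by move: NX; rewrite (cardfsD1 x X) xX add1n.
  have [Z [ZY [nZ hZ]]] := h0 Y NY (fun A => c (x |` A)).
  have xZ : x \notin Z by apply: contra xY; move/fsubsetP: ZY; apply.
  have ZX : Z `<=` X by exact: fsubset_trans ZY YX.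
  have xZX : x |` Z `<=` X.
    by apply/fsubsetP => y; rewrite in_fset1U => /orP[/eqP->//|]; move/fsubsetP: ZX; apply.
  case: hZ => hZ.
  - have [B [BZ [[aB hB]|[bB hB]]]] := h1 Z (leq_trans (leq_maxl _ _) nZ) c.
    + have xB : x \notin B by apply: contra xZ; move/fsubsetP: BZ; apply.
      exists (x |` B); split.
        apply/fsubsetP => y; rewrite in_fset1U => /orP[/eqP->//|yB].
        by move/fsubsetP: ZX; apply; move/fsubsetP: BZ; apply.
      left; split; first by rewrite cardfsU1 xB add1n.
      apply: addx => // A AB cA; apply: hZ => //; exact: fsubset_trans AB BZ.
    + exists B; split; first exact: fsubset_trans BZ ZX.
      by right; split.
  - have [B [BZ [[aB hB]|[bB hB]]]] := h2 Z (leq_trans (leq_maxr _ _) nZ) c.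
    + exists B; split; first exact: fsubset_trans BZ ZX.
      by left; split.
    + have xB : x \notin B by apply: contra xZ; move/fsubsetP: BZ; apply.
      exists (x |` B); split.
        apply/fsubsetP => y; rewrite in_fset1U => /orP[/eqP->//|yB].
        by move/fsubsetP: ZX; apply; move/fsubsetP: BZ; apply.
      right; split; first by rewrite cardfsU1 xB add1n.
      apply: (addx (P := fun A => ~ c A)) => // A AB cA; apply: hZ => //.
      exact: fsubset_trans AB BZ.
move=> n; have [N hN] := S n n; exists N => X NX c.
have [B [BX [[nB hB]|[nB hB]]]] := hN X NX c; exists B; split => //; split => //.
  by left.
by right.
Qed.

Lemma ramsey m : RamseyP m.
Proof. elim: m => [|m IH]; [exact: ramsey0 | exact: ramseyS]. Qed.


Definition fs (s : seq nat) : {fset nat} := [fset y in s].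

Lemma mem_fs s y : (y \in fs s) = (y \in s).
Proof. by rewrite /fs inE. Qed.

Lemma card_fs s : uniq s -> #|` fs s| = size s.
Proof. by move=> us; rewrite /fs card_fseq undup_id. Qed.

Lemma fs_enum (A : {fset nat}) : fs (enum_fset A) = A.
Proof. by apply/fsetP => y; rewrite mem_fs. Qed.

Definition mkOm n (A : {fset nat}) (h : #|` A| == n) : OmSub n :=
  @exist _ (fun A : {fset nat} => #|` A| == n) A h.

Lemma phi_setE m (x : H m) : phi_set x = fs (val x).
Proof. by []. Qed.

Lemma card_phi m (x : H m) : #|` phi_set x| == m.
Proof. by rewrite phi_setE card_fs ?uniqH ?sizeH. Qed.

Lemma phiA m (x : H m) : exists A : OmSub m, val A = phi_set x.
Proof. by exists (mkOm (card_phi x)). Qed.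

Lemma phi_pre_and m (T T' : pset (OmSub m)) x :
  phi_pre T x -> phi_pre T' x -> phi_pre (fun A => T A /\ T' A) x.
Proof.
move=> [A [TA eA]] [A' [TA' eA']].
have e : A = A' by apply: val_inj; rewrite eA eA'.
by exists A; split => //; split => //; rewrite e.
Qed.

Lemma phi_pre_mono m (T T' : pset (OmSub m)) x :
  (forall A, T A -> T' A) -> phi_pre T x -> phi_pre T' x.
Proof. by move=> h [A [TA eA]]; exists A; split => //; apply: h. Qed.

Lemma phi_pre_disj m (T : pset (OmSub m)) x :
  phi_pre T x -> phi_pre (fun A => ~ T A) x -> False.
Proof.
by move=> h1 h2; have [A [[TA nTA] _]] := phi_pre_and h1 h2.
Qed.

Lemma phi_pre_cover m (T : pset (OmSub m)) x :
  phi_pre T x \/ phi_pre (fun A => ~ T A) x.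
Proof.
have [A eA] := phiA x.
by case: (classic (T A)) => h; [left|right]; exists A.
Qed.

Lemma map_enum_ord (f : nat -> nat) m :
  [seq f (nat_of_ord i) | i <- enum 'I_m] = [seq f i | i <- iota 0 m].
Proof. by rewrite -val_enum_ord -map_comp. Qed.

Lemma validH_comp n m (x : seq nat) (e : 'I_m -> 'I_n) : validH n x -> injective e ->
  validH m [seq nth 0 x (e i) | i <- enum 'I_m].
Proof.
move=> /andP[/eqP sx ux] ie; rewrite /validH size_map size_enum_ord eqxx /=.
rewrite map_inj_uniq ?enum_uniq // => i j /eqP.
rewrite nth_uniq ?sx // => /eqP /ord_inj; exact: ie.
Qed.

Lemma thickS_pre m (T : pset (OmSub m)) : thickS T -> thickH (phi_pre T).
Proof.
move=> tT n mn; have [s hs] := tT n mn.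
set l := enum_fset (val s).
have vl : validH n l.
  by rewrite /validH fset_uniq andbT; case: s {hs} @l => A /= /eqP ->.
exists (mkH vl) => e ie /=.
have vw := validH_comp vl ie.
exists (mkH vw); split => //.
have [A eA] := phiA (mkH vw).
exists A; split => //; apply: hs.
rewrite eA phi_setE /=; apply/fsubsetP => y; rewrite mem_fs => /mapP[i _ ->].
rewrite -[X in _ \in X]fs_enum mem_fs; apply: mem_nth.
by have := validHP (mkH vl); rewrite /validH => /andP[/eqP -> _].
Qed.

Lemma thickH_pre m (T : pset (OmSub m)) : thickH (phi_pre T) -> thickS T.
Proof.
move=> tT n mn; have [s hs] := tT n mn.
exists (mkOm (card_phi s)) => A /= AS.
set a := enum_fset (val A).
have sa : size a = m by case: A {AS} @a => B /= /eqP.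
have pf : forall i : 'I_m, index (nth 0 a i) (val s) < n.
  move=> i; suff : index (nth 0 a i) (val s) < size (val s) by rewrite sizeH.
  rewrite index_mem.
  have : nth 0 a i \in val A by rewrite -[X in _ \in X]fs_enum mem_fs mem_nth ?sa.
  by move/fsubsetP: AS => h /h; rewrite phi_setE mem_fs.
pose e := fun i : 'I_m => Ordinal (pf i).
have ie : injective e.
  move=> i j /(congr1 (@nat_of_ord _)) /=.
  move=> /(congr1 (fun k => nth 0 (val s) k)).
  rewrite !nth_index; last first.
  - by rewrite -index_mem sizeH; apply: pf.
  - by rewrite -index_mem sizeH; apply: pf.
  move/eqP; rewrite nth_uniq ?sa ?fset_uniq // => /eqP; exact: ord_inj.
have := hs e ie.
have -> : [seq nth 0 (val s) (e i) | i <- enum 'I_m] = a.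
  rewrite /e /=.
  have -> : [seq nth 0 (val s) (index (nth 0 a (nat_of_ord i)) (val s)) | i : 'I_m <- enum 'I_m] =
            [seq nth 0 a (nat_of_ord i) | i : 'I_m <- enum 'I_m].
    apply: eq_map => i; rewrite nth_index //.
    by rewrite -index_mem sizeH; exact: (pf i).
  by rewrite map_enum_ord -{2}(mkseq_nth 0 a) sa.
case=> y [[A' [TA' eA']] ey].
have -> : A = A' by apply: val_inj; rewrite eA' phi_setE ey fs_enum.
exact: TA'.
Qed.


Lemma perm_emb n m (s : H n) (a : seq nat) : uniq a -> size a = m ->
  (forall v, v \in a -> v \in val s) ->
  exists e : 'I_m -> 'I_n, injective e /\ [seq nth 0 (val s) (e i) | i <- enum 'I_m] = a.
Proof.
move=> ua sa als.
have pf : forall i : 'I_m, index (nth 0 a i) (val s) < n.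
  move=> i; suff : index (nth 0 a i) (val s) < size (val s) by rewrite sizeH.
  by rewrite index_mem; apply: als; rewrite mem_nth ?sa.
pose e := fun i : 'I_m => Ordinal (pf i).
exists e; split.
  move=> i j /(congr1 (@nat_of_ord _)) /=.
  move=> /(congr1 (fun k => nth 0 (val s) k)).
  rewrite !nth_index; last first.
  - by rewrite -index_mem sizeH; apply: pf.
  - by rewrite -index_mem sizeH; apply: pf.
  move/eqP; rewrite nth_uniq ?sa // => /eqP; exact: ord_inj.
rewrite /e /=.
have -> : [seq nth 0 (val s) (index (nth 0 a (nat_of_ord i)) (val s)) | i : 'I_m <- enum 'I_m] =
          [seq nth 0 a (nat_of_ord i) | i : 'I_m <- enum 'I_m].
  apply: eq_map => i; rewrite nth_index //.
  by rewrite -index_mem sizeH; apply: pf.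
by rewrite map_enum_ord -{2}(mkseq_nth 0 a) sa.
Qed.

Lemma id_emb m (s : seq nat) : size s = m ->
  [seq nth 0 s (@id 'I_m i) | i <- enum 'I_m] = s.
Proof. by move=> ss; rewrite map_enum_ord -{2}(mkseq_nth 0 s) ss. Qed.

Lemma thickH_mono m (S S' : pset (H m)) : (forall x, S x -> S' x) -> thickH S -> thickH S'.
Proof.
move=> h tS n mn; have [s hs] := tS n mn; exists s => e ie.
by have [y [Sy ey]] := hs e ie; exists y; split => //; apply: h.
Qed.

Section B1.
Variables (m : nat) (p : pset (pset (OmSub m))).
Hypothesis tp : thick_ultrafilterS p.

Let B := fun S : pset (H m) => exists T, p T /\ S = phi_pre T.

Lemma gen_char S : gen_filter B S <-> exists T, p T /\ forall x, phi_pre T x -> S x.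
Proof.
have [[[pT pM pI] p0 pem] pth] := tp.
split.
  move=> h; apply: (h (fun S => exists T, p T /\ forall x, phi_pre T x -> S x)).
  - split.
    + by exists (fun _ => True); split.
    + by move=> A A' [T [pT' hT]] AA'; exists T; split => // x /hT; apply: AA'.
    + move=> A A' [T [pT1 h1]] [T' [pT2 h2]].
      exists (fun Z => T Z /\ T' Z); split; first exact: pI.
      move=> x hx; split; [apply: h1|apply: h2]; apply: phi_pre_mono hx; by move=> ? [].
  - by move=> b [T [pT' ->]]; exists T; split.
move=> [T [pT' h]] F fF FB; case: fF => _ FM _; apply: FM (h).
by apply: FB; exists T.
Qed.

Lemma gen_max : maximal_thick_filterH (gen_filter B).
Proof.
have [[[pT pM pI] p0 pem] pth] := tp.
split.
  split.
    split.
    - by apply/gen_char; exists (fun _ => True); split.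
    - move=> A A' /gen_char [T [pT' h]] AA'; apply/gen_char; exists T; split => //.
      by move=> x /h; apply: AA'.
    - move=> A A' /gen_char [T [pT1 h1]] /gen_char [T' [pT2 h2]]; apply/gen_char.
      exists (fun Z => T Z /\ T' Z); split; first exact: pI.
      move=> x hx; split; [apply: h1|apply: h2]; apply: phi_pre_mono hx; by move=> ? [].
  move=> S /gen_char [T [pT' h]]; apply: thickH_mono h _.
  by apply: thickS_pre; apply: pth.
move=> F' [[F'T F'M F'I] F'th] sub S F'S; apply/gen_char.
pose T0 := fun A : OmSub m => forall x : H m, val A = phi_set x -> S x.
have pT0 : p T0.
  case: (pem T0) => // pnT0; exfalso.
  have g : gen_filter B (phi_pre (fun A => ~ T0 A)).
    by apply/gen_char; exists (fun A => ~ T0 A); split.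
  have := F'th _ (F'I _ _ F'S (sub _ g)).
  move=> /(_ m (leqnn m)) [s hs].
  have [y [[Sy [A [nTA eA]]] ey]] := hs id (@inj_id _).
  rewrite id_emb ?sizeH // in ey.
  move/val_inj: ey => ey; subst y.
  apply: nTA => x ex.
  have [e [ie ee]] : exists e : 'I_m -> 'I_m, injective e /\
      [seq nth 0 (val s) (e i) | i <- enum 'I_m] = val x.
    apply: perm_emb; [exact: uniqH| exact: sizeH|].
    move=> v vx; rewrite -mem_fs -phi_setE -eA ex phi_setE mem_fs //.
  have [y [[Sy' _] ey]] := hs e ie.
  by rewrite ee in ey; move/val_inj: ey => <-.
exists T0; split => // x [A [TA eA]].
exact: TA.
Qed.
End B1.


Lemma inH_mono m (S S' : pset (H m)) s : (forall y, S y -> S' y) -> inH S s -> inH S' s.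
Proof. by move=> h [y [Sy ey]]; exists y; split => //; apply: h. Qed.

Lemma FY_thick (M : pset SGfam) m T : subflow M -> FY M m T -> thickH T.
Proof.
move=> [MS [a Ma] _ iM] FT n mn.
have [ua _] := MS a Ma.
pose A := fun (e : {ffun 'I_m -> 'I_n}) (x : H n) =>
  injective e -> inH T [seq nth 0 (val x) (e i) | i <- enum 'I_m].
have hA : forall e, e \in enum {ffun 'I_m -> 'I_n} -> a n (A e).
  move=> e _; case: (classic (injective e)) => ie; last first.
    by apply: (uf_all (ua n)) => x /ie.
  have [g [bg hg]] := ext_ord ie.
  have := FT _ (iM g bg a Ma).
  have gn : bnd g m <= n.
    apply: bnd_le => i im; have := hg (Ordinal im); rewrite /= => ->; exact: ltn_ord.
  rewrite (act_at _ (MS a Ma) gn) => h; apply: (uf_mono (ua n) h) => x.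
  by move=> hx _; rewrite -(gs_ord _ hg).
have [s hs] := uf_ne (ua n) (uf_bigI (ua n) hA).
exists s => e ie.
have := hs (finfun e); rewrite mem_enum => /(_ isT).
have ie' : injective (finfun e) by move=> i j; rewrite !ffunE; apply: ie.
move=> /(_ ie'); congr inH; apply: eq_map => i; by rewrite ffunE.
Qed.

Definition Pn m (P : pset (H m)) n : pset (H n) :=
  fun y => forall e : 'I_m -> 'I_n, injective e ->
    inH P [seq nth 0 (val y) (e i) | i <- enum 'I_m].
Arguments Pn {m} P n _.

Lemma Pn_down m (P : pset (H m)) (b : SGfam) k n : isSG b -> k <= n ->
  b n (Pn P n) -> b k (Pn P k).
Proof.
move=> [ub cb] kn h; rewrite (cb _ _ kn); apply: (uf_mono (ub n) h) => x Px.
have v := validH_take kn (validHP x).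
exists (mkH v); split => // e ie.
have iw : injective (widen_ord kn \o e).
  by move=> i j /= /(congr1 (@nat_of_ord _)) /= /ord_inj; apply: ie.
have := Px _ iw; congr inH; apply: eq_map => i /=.
by rewrite nth_take.
Qed.

Lemma Pn_act m (P : pset (H m)) (a : SGfam) : isSG a -> (forall n, a n (Pn P n)) ->
  forall g, Sinfty g -> @act a g m P.
Proof.
move=> aS h g bg; have [ua _] := aS.
rewrite (act_at _ aS (leqnn (bnd g m))).
pose e := fun i : 'I_m => Ordinal (bnd_lt g (ltn_ord i)).
have ie : injective e.
  by move=> i j /(congr1 (@nat_of_ord _)) /= /(bij_inj bg) /ord_inj.
apply: (uf_mono (ua _) (h (bnd g m))) => x /(_ e ie).
by rewrite (@gs_ord _ _ e g).
Qed.

Lemma C_P (M : pset SGfam) m (P : pset (H m)) : minimal_subflow M ->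
  (forall n, exists b, M b /\ b n (Pn P n)) -> FY M m P.
Proof.
move=> [sM minM] h.
have [MS _ cM iM] := sM.
have [b hb] := boolp.choice h.
pose F := fun S : pset nat => exists n0, forall n, n0 <= n -> S n.
have fF : is_filter F.
  split.
  - by exists 0.
  - by move=> A A' [n0 h0] AA'; exists n0 => n /h0; apply: AA'.
  - move=> A A' [n0 h0] [n1 h1]; exists (maxn n0 n1) => n.
    by rewrite geq_max => /andP[/h0 ? /h1 ?].
have pF : ~ F (fun _ => False) by move=> [n0 /(_ n0 (leqnn _))].
have [W [UW FW]] := uf_ext fF pF.
have bS : forall n, isSG (b n) by move=> n; apply: MS; case: (hb n).
pose a := lim W b.
have aS : isSG a by apply: lim_SG.
have Ma : M a.
  apply: cM => // n S WS.
  have [k bk] := uf_ne UW WS.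
  by exists (b k); split => //; case: (hb k).
have aP : forall n, a n (Pn P n).
  move=> n; apply: FW; exists n => k nk.
  by apply: Pn_down nk _; case: (hb k).
have sI : subflow (Inv M (fun S => S = P)).
  apply: Inv_subflow => //; exists a; split => // g bg S ->.
  exact: Pn_act.
have := minM _ sI (fun c (hc : Inv M (fun S => S = P) c) => proj1 hc).
move=> hM c Mc; have [_ hc] := hM c Mc.
by rewrite -act_id; [apply: hc => //; exact: bij_id | apply: MS].
Qed.


Lemma nth_ordmap n (F : 'I_n -> nat) (k : 'I_n) :
  nth 0 [seq F i | i <- enum 'I_n] k = F k.
Proof. by rewrite (nth_map k) ?size_enum_ord // nth_ord_enum. Qed.

Lemma fs_map_enum (f : nat -> nat) (l : seq nat) :
  fs [seq f j | j <- enum_fset (fs l)] = fs [seq f j | j <- l].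
Proof.
apply/fsetP => v; rewrite !mem_fs.
apply/mapP/mapP => [[j jA ->]|[j jl ->]]; exists j => //.
- by move: jA; rewrite -[j \in enum_fset _]/(j \in fs l) mem_fs.
- by rewrite -[j \in enum_fset _]/(j \in fs l) mem_fs.
Qed.

Lemma ramsey_claim m (T : pset (OmSub m)) n N :
  (forall X : {fset nat}, N <= #|` X| ->
     forall c, exists B, B `<=` X /\ n <= #|` B| /\ homog c m B) ->
  forall y : H N, exists e' : {ffun 'I_n -> 'I_N}, injective e' /\
    inH (fun z => Pn (phi_pre T) n z \/ Pn (phi_pre (fun A => ~ T A)) n z)
        [seq nth 0 (val y) (e' i) | i <- enum 'I_n].
Proof.
move=> hN y.
set X := fs (iota 0 N).
have cX : N <= #|` X| by rewrite card_fs ?iota_uniq // size_iota.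
pose c := fun A : {fset nat} => exists Z : OmSub m, T Z /\
   val Z = fs [seq nth 0 (val y) j | j <- enum_fset A].
have [B [BX [nB hom]]] := hN X cX c.
set b := enum_fset B.
have ub : uniq b := fset_uniq B.
have inb : forall i, i < n -> nth 0 b i \in B.
  by move=> i iN; rewrite -[_ \in B]/(_ \in b) mem_nth //; exact: leq_trans iN nB.
have pf : forall i : 'I_n, nth 0 b i < N.
  move=> i; have := inb i (ltn_ord i); move/fsubsetP: BX => h /h.
  by rewrite mem_fs mem_iota add0n.
pose e' := [ffun i => Ordinal (pf i)].
have e'E : forall i, nat_of_ord (e' i) = nth 0 b i by move=> i; rewrite ffunE.
have ie' : injective e'.
  move=> i j /(congr1 (@nat_of_ord _)); rewrite !e'E => /eqP.
  rewrite nth_uniq // ?(leq_trans (ltn_ord _) nB) // => /eqP; exact: ord_inj.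
exists e'; split => //.
have vz := validH_comp (validHP y) ie'.
exists (mkH vz); split => //=.
set z := [seq nth 0 (val y) (e' i) | i <- enum 'I_n].
have key : forall e : 'I_m -> 'I_n, injective e ->
   let w := [seq nth 0 z (e i) | i <- enum 'I_m] in
   let l' := [seq nth 0 b (e i) | i <- enum 'I_m] in
   [/\ validH m w, fs l' `<=` B, #|` fs l'| = m &
       fs [seq nth 0 (val y) j | j <- enum_fset (fs l')] = fs w].
  move=> e ie w l'.
  have ul' : uniq l'.
    rewrite map_inj_uniq ?enum_uniq // => i j /eqP.
    rewrite nth_uniq // ?(leq_trans (ltn_ord _) nB) // => /eqP /ord_inj; exact: ie.
  split.
  - exact: validH_comp vz ie.
  - apply/fsubsetP => v; rewrite mem_fs => /mapP[i _ ->]; exact: inb.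
  - by rewrite card_fs // size_map size_enum_ord.
  - rewrite fs_map_enum /w /l' -map_comp; congr fs; apply: eq_map => i /=.
    by rewrite /z nth_ordmap e'E.
case: hom => hom; [left|right] => e ie.
- have [vw sB cA eq] := key e ie.
  exists (mkH vw); split => //.
  have [Z [TZ eZ]] := hom _ sB cA.
  by exists Z; split => //; rewrite eZ eq.
- have [vw sB cA eq] := key e ie.
  exists (mkH vw); split => //.
  have [A eA] := phiA (mkH vw).
  exists A; split => // TA; apply: (hom _ sB cA).
  by exists A; split => //; rewrite eA eq.
Qed.

Lemma ramsey_step (M : pset SGfam) m (T : pset (OmSub m)) n : subflow M ->
  (exists b, M b /\ b n (Pn (phi_pre T) n)) \/
  (exists b, M b /\ b n (Pn (phi_pre (fun A => ~ T A)) n)).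
Proof.
move=> [MS [a0 Ma0] _ iM].
have [N hN] := ramsey m n.
have [ua _] := MS a0 Ma0.
pose Z := fun z : H n => Pn (phi_pre T) n z \/ Pn (phi_pre (fun A => ~ T A)) n z.
have h1 : a0 N (fun y => exists e', e' \in enum {ffun 'I_n -> 'I_N} /\
    (injective e' /\ inH Z [seq nth 0 (val y) (e' i) | i <- enum 'I_n])).
  apply: (uf_all (ua N)) => y.
  have [e' he'] := ramsey_claim T hN y.
  by exists e'; rewrite mem_enum.
have [e' [_ he']] := uf_bigU (ua N) h1.
have [y [ie' _]] := uf_ne (ua N) he'.
have [g [bg hg]] := ext_ord ie'.
have gN : bnd g n <= N.
  apply: bnd_le => i im; have := hg (Ordinal im); rewrite /= => ->; exact: ltn_ord.
have hZ : @act a0 g n Z.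
  rewrite (act_at _ (MS a0 Ma0) gN); apply: (uf_mono (ua N) he') => x [_ hx].
  by rewrite (gs_ord _ hg).
have Ma := iM g bg a0 Ma0.
have [ub _] := MS _ Ma.
case: (uf_or (ub n) hZ) => h; [left|right]; by exists (act a0 g).
Qed.


Lemma partA (M : pset SGfam) m : minimal_subflow M -> thick_ultrafilterS (phi_img (FY M m)).
Proof.
move=> mM; have [sM minM] := mM; have [MS [a0 Ma0] cM iM] := sM.
have uM : forall a n, M a -> is_ultrafilter (a n) by move=> a n /MS [].
split.
  split.
  - split.
    + move=> a Ma; apply: (uf_all (uM a m Ma)) => x.
      by have [A eA] := phiA x; exists A.
    + move=> A B FA AB a Ma; apply: (uf_mono (uM a m Ma) (FA a Ma)).
      by move=> x; apply: phi_pre_mono.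
    + move=> A B FA FB a Ma; apply: (uf_mono (uM a m Ma) (uf_and (uM a m Ma) (FA a Ma) (FB a Ma))).
      by move=> x [hA hB]; apply: phi_pre_and.
  - move=> F0; have [x [A [[] _]]] := uf_ne (uM a0 m Ma0) (F0 a0 Ma0).
  - move=> T.
    case: (classic (forall n, exists b, M b /\ b n (Pn (phi_pre T) n))) => hA.
      by left; apply: C_P.
    right; apply: C_P => // n.
    have [n0 hn0] := not_all_ex_not _ _ hA.
    case: (ramsey_step T (maxn n n0) sM) => [[b [Mb hb]]|[b [Mb hb]]].
      exfalso; apply: hn0; exists b; split => //.
      by apply: Pn_down (leq_maxr _ _) hb; apply: MS.
    exists b; split => //.
    by apply: Pn_down (leq_maxl _ _) hb; apply: MS.
move=> T FT; apply: thickH_pre; exact: FY_thick sM FT.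
Qed.

Lemma valid_pt (x : nat -> nat) k : injective x -> validH k [seq x i | i <- iota 0 k].
Proof.
move=> ix; rewrite /validH size_map size_iota eqxx /=.
rewrite map_inj_uniq ?iota_uniq //.
Qed.

Definition pt (x : nat -> nat) (ix : injective x) : SGfam :=
  fun k (S : pset (H k)) => S (mkH (valid_pt k ix)).

Lemma pt_SG x (ix : injective x) : isSG (pt ix).
Proof.
split.
  move=> n; split; [split| |]; rewrite /pt //.
  - by move=> A B SA AB; apply: AB.
  - by move=> A; apply: classic.
move=> m n mn S; rewrite /pt; split.
  move=> Sm; exists (mkH (valid_pt m ix)); split => //=.
  by rewrite -map_take take_iota (minn_idPl mn).
move=> [y [Sy ey]].
have -> : mkH (valid_pt m ix) = y.
  by apply: val_inj; rewrite ey /= -map_take take_iota (minn_idPl mn).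
exact: Sy.
Qed.

Lemma le_sumn (l : seq nat) v : v \in l -> v <= sumn l.
Proof.
elim: l => [|u l IH] //=; rewrite inE => /orP[/eqP ->|/IH h].
  exact: leq_addr.
by apply: leq_trans h (leq_addl _ _).
Qed.

Lemma om_inj n (s : OmSub n) : exists x : nat -> nat, injective x /\
  forall j, j < n -> x j \in val s.
Proof.
set l := enum_fset (val s).
have sl : size l = n by case: s @l => A /= /eqP.
pose x := fun j => if j < n then nth 0 l j else (sumn l + j.+1)%N.
exists x; split; last first.
  move=> j jn; rewrite /x jn; rewrite -[_ \in val s]/(_ \in l) mem_nth ?sl //.
have small : forall j, j < n -> nth 0 l j <= sumn l.
  by move=> j jn; apply: le_sumn; rewrite mem_nth ?sl.
move=> i j; rewrite /x; case: (ltnP i n) => iN; case: (ltnP j n) => jN.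
- move/eqP; rewrite nth_uniq ?sl ?fset_uniq // => /eqP //.
- move=> e; have := small i iN; rewrite e => h.
  by exfalso; move: h; rewrite -{2}[sumn l]addn0 leq_add2l.
- move=> e; have := small j jN; rewrite -e => h.
  by exfalso; move: h; rewrite -{2}[sumn l]addn0 leq_add2l.
- by move/addnI => [].
Qed.

Lemma gs_pt (x : nat -> nat) g m N : (forall i, i < m -> g i < N) ->
  gs g [seq x i | i <- iota 0 N] m = [seq x (g i) | i <- iota 0 m].
Proof.
move=> h; apply/eq_in_map => i; rewrite mem_iota add0n => /andP[_ im].
by rewrite (nth_map 0) ?size_iota ?h // nth_iota ?h.
Qed.

Lemma partB2 m (p : pset (pset (OmSub m))) : thick_ultrafilterS p ->
  exists M, minimal_subflow M /\ (forall T, p T <-> phi_img (FY M m) T).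
Proof.
move=> tp; have [[[pT pM pI] p0 pem] pth] := tp.
pose I := (pset (OmSub m) * nat)%type.
have hb : forall i : I, exists b, isSG b /\ (p i.1 -> m <= i.2 -> forall g, injective g ->
    bnd g m <= i.2 -> b (bnd g m) (fun y => inH (phi_pre i.1) (gs g (val y) m))).
  move=> [T n] /=.
  case: (classic (p T /\ m <= n)) => [[pT' mn]|nh]; last first.
    exists (pt (@inj_id nat)); split; first exact: pt_SG.
    by move=> h1 h2; exfalso; apply: nh.
  have [s hs] := pth T pT' n mn.
  have [x [ix xs]] := om_inj s.
  exists (pt ix); split; first exact: pt_SG.
  move=> _ _ g ig gn; rewrite /pt /= gs_pt; last by move=> i; apply: bnd_lt.
  have vw : validH m [seq x (g i) | i <- iota 0 m].
    rewrite /validH size_map size_iota eqxx /= map_inj_uniq ?iota_uniq //.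
    by move=> i j /ix /ig.
  exists (mkH vw); split => //.
  have [A eA] := phiA (mkH vw); exists A; split => //; apply: hs.
  rewrite eA phi_setE /=; apply/fsubsetP => v; rewrite mem_fs => /mapP[i].
  rewrite mem_iota add0n => /andP[_ im] ->; apply: xs.
  exact: leq_trans (bnd_lt g im) gn.
have [b hb'] := boolp.choice hb.
pose F := fun S : pset I => exists T0, p T0 /\ exists n0, forall T n, p T ->
   (forall A, T A -> T0 A) -> n0 <= n -> S (T, n).
have fF : is_filter F.
  split.
  - by exists (fun _ => True); split => //; exists 0.
  - move=> A B [T0 [pT0 [n0 h]]] AB; exists T0; split => //; exists n0.
    by move=> T n pT' sT nn; apply: AB; apply: h.
  - move=> A B [T0 [pT0 [n0 h0]]] [T1 [pT1 [n1 h1]]].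
    exists (fun Z => T0 Z /\ T1 Z); split; first exact: pI.
    exists (maxn n0 n1) => T n pT' sT; rewrite geq_max => /andP[l0 l1].
    by split; [apply: h0 | apply: h1] => // Z /sT [].
have pF : ~ F (fun _ => False).
  by move=> [T0 [pT0 [n0 h]]]; apply: (h T0 n0).
have [W [UW FW]] := uf_ext fF pF.
have bS : forall i, isSG (b i) by move=> i; case: (hb' i).
pose Y := Inv isSG (fun S : pset (H m) => exists T, p T /\ S = phi_pre T).
have sSG : subflow isSG.
  split => //.
  - by exists (pt (@inj_id nat)); exact: pt_SG.
  - by move=> g bg a aS; apply: act_SG => //; apply: bij_inj.
have sY : subflow Y.
  apply: Inv_subflow => //.
  exists (lim W b); split; first exact: lim_SG.
  move=> g bg S [T0 [pT0 ->]].
  rewrite /act /lim; apply: FW; exists T0; split => //.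
  exists (maxn (bnd g m) m) => T n pT' sT; rewrite geq_max => /andP[l1 l2].
  have [_ h] := hb' (T, n).
  have := h pT' l2 g (bij_inj bg) l1.
  have [ub _] := bS (T, n).
  move=> hh; apply: (uf_mono (ub _) hh) => y.
  apply: inH_mono => z; apply: phi_pre_mono => A; exact: sT.
have [M [mM MY]] := exists_minimal sY.
have [[MS [a0 Ma0] _ _] _] := mM.
have hp : forall T, p T -> phi_img (FY M m) T.
  move=> T pT' a Ma; have [aS ha] := MY a Ma.
  rewrite -act_id //; apply: ha; first exact: bij_id.
  by exists T.
exists M; split => // T; split; first exact: hp.
move=> FT; case: (pem T) => // pnT; exfalso.
have FnT := hp _ pnT.
have [ua _] := MS a0 Ma0.
have [x [h1 h2]] := uf_ne (ua m) (uf_and (ua m) (FT a0 Ma0) (FnT a0 Ma0)).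
exact: phi_pre_disj h1 h2.
Qed.

Local Close Scope fset_scope.

Theorem mainTheorem9 (m : nat) :
  (forall M : pset SGfam, minimal_subflow M ->
     thick_ultrafilterS (phi_img (FY M m))) /\
  (forall p : pset (pset (OmSub m)), thick_ultrafilterS p ->
     maximal_thick_filterH
       (gen_filter (fun S : pset (H m) => exists T, p T /\ S = phi_pre T)) /\
     (exists M : pset SGfam, minimal_subflow M /\
        (forall T, p T <-> phi_img (FY M m) T))).
Proof.
split; first by move=> M; apply: partA.
move=> p tp; split; first exact: gen_max.
exact: partB2.
Qed.
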